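(* Let $B(z)=\sum_{n\ge0}b_nz^n$, where $b_n$ is the number of Motzkin paths of length $n$ that have no horizontal step on level equal to their height. Then $$B(z)=(1+v+v^2)(1-v^{-2})\sum_{h\ge1}(-1)^{h-1}\frac{v^{h}}{1-v^{h}}+\frac{(1+v)(1+v+v^2)}{v}.$$
   Context: A Motzkin path of length $n$ is a sequence of $n$ steps, each an up-step $(1,1)$, a down-step $(1,-1)$ or a horizontal step $(1,0)$, starting at $(0,0)$, ending at $(n,0)$, and never going below the $x$-axis. Its height $h$ is the maximal $y$-coordinate reached. A horizontal step on level $j$ is a horizontal step from $(x,j)$ to $(x+1,j)$. Here $v=v(z)=\frac{1-z-\sqrt{1-2z-3z^2}}{2z}$ is the formal power series with $v(0)=0$ satisfying $z=\frac{v}{1+v+v^2}$. *)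

(* Defs.v *)
From Stdlib Require Import Reals ZArith List.
From Coquelicot Require Import Coquelicot.
Import ListNotations.

Inductive step := U | D | H.

Definition delta (s : step) : Z :=
  match s with U => 1%Z | D => (-1)%Z | H => 0%Z end.

Fixpoint all_words (n : nat) : list (list step) :=
  match n with
  | O => [nil]
  | S n => flat_map (fun w => [U :: w; D :: w; H :: w]) (all_words n)
  end.

Fixpoint levels (y : Z) (w : list step) : list Z :=
  match w with
  | nil => [y]
  | s :: w' => y :: levels (y + delta s)%Z w'
  end.

Definition is_motzkin (w : list step) : bool :=
  forallb (fun y => Z.leb 0 y) (levels 0 w) && Z.eqb (last (levels 0 w) 0%Z) 0.

Definition height (w : list step) : Z := fold_right Z.max 0%Z (levels 0 w).

Fixpoint has_H_at (y j : Z) (w : list step) : bool :=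
  match w with
  | nil => false
  | s :: w' =>
      (match s with H => Z.eqb y j | _ => false end)
      || has_H_at (y + delta s)%Z j w'
  end.

Definition good (w : list step) : bool :=
  is_motzkin w && negb (has_H_at 0 (height w) w).

Definition b (n : nat) : nat := length (filter good (all_words n)).

Definition v (z : R) : R := (1 - z - sqrt (1 - 2 * z - 3 * z ^ 2)) / (2 * z).

(* Main.v *)
Require Import Defs.
From Stdlib Require Import Reals.
From Coquelicot Require Import Coquelicot.
Open Scope R_scope.
Local Notation D := Defs.D (only parsing).
From Stdlib Require Import Reals ZArith List Lia Bool.
Import ListNotations.
Open Scope Z_scope.

Fixpoint acc (top t j : Z) (w : list step) : bool :=
  (0 <=? j) && (j <=? top) &&
  match w with
  | nil => j =? 0
  | s :: w' => (match s with H => negb (j =? t) | _ => true end) && acc top t (j + delta s) w'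
  end.

Lemma levels_cons j w : exists l, levels j w = j :: l.
Proof. destruct w; simpl; eauto. Qed.

Lemma acc_levels top t w : forall j, acc top t j w =
  forallb (fun y => (0<=?y)&&(y<=?top)) (levels j w) && (last (levels j w) 0 =? 0) && negb (has_H_at j t w).
Proof.
  induction w as [|s w IH]; intro j; simpl.
  - destruct (0<=?j), (j<=?top), (j=?0); reflexivity.
  - rewrite IH. destruct (levels_cons (j + delta s) w) as [l Hl]. rewrite Hl.
    change (last ((j + delta s) :: l) 0) with (last ((j + delta s) :: l) 0).
    replace (last (j :: (j + delta s) :: l) 0) with (last ((j + delta s) :: l) 0) by reflexivity.
    destruct s; simpl;
    repeat match goal with
    | |- context [?x <=? ?y] => destruct (x <=? y)
    | |- context [?x =? ?y] => destruct (x =? y)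
    | |- context [forallb ?f ?y] => destruct (forallb f y)
    | |- context [has_H_at ?a ?b ?c] => destruct (has_H_at a b c)
    end; reflexivity.
Qed.

Lemma fb l top : forallb (fun y => (0<=?y)&&(y<=?top)) l =
  forallb (fun y => 0<=?y) l && forallb (fun y=> y<=?top) l.
Proof. induction l; simpl; auto. rewrite IHl. destruct (0<=?a), (a<=?top), (forallb (fun y => 0<=?y) l), (forallb (fun y=> y<=?top) l); reflexivity. Qed.

Lemma fm l top : (0<=?top) && forallb (fun y => y<=?top) l = (Z.max 0 (fold_right Z.max 0 l) <=? top).
Proof.
  induction l; simpl.
  - destruct (Z.leb_spec 0 top), (Z.leb_spec (Z.max 0 0) top); auto; lia.
  - assert (E: (0 <=? top) && ((a <=? top) && forallb (fun y : Z => y <=? top) l)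
      = (a <=? top) && ((0 <=? top) && forallb (fun y : Z => y <=? top) l)).
    { destruct (0<=?top), (a<=?top); reflexivity. }
    rewrite E, IHl.
    destruct (Z.leb_spec a top), (Z.leb_spec (Z.max 0 (fold_right Z.max 0 l)) top),
      (Z.leb_spec (Z.max 0 (Z.max a (fold_right Z.max 0 l))) top); simpl; auto; lia.
Qed.

Lemma good_char h w : 0 <= h ->
  good w && (height w =? h) = acc h h 0 w && negb (acc (h-1) h 0 w).
Proof.
  intro hh. unfold good, is_motzkin, height. rewrite !acc_levels.
  destruct (levels_cons 0 w) as [l Hl]. rewrite Hl.
  set (B := last (0 :: l) 0 =? 0).
  cbn [forallb fold_right].
  rewrite !fb.
  assert (F1 := fm l h). assert (F2 := fm l (h-1)).
  set (m := Z.max 0 (fold_right Z.max 0 l)) in *.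
  change (0 <=? 0) with true.
  assert (m0 : 0 <= m) by (unfold m; lia).
  destruct (Z.eqb_spec m h) as [E|E].
  - rewrite E in *.
    assert (G1 : (h <=? h) = true) by (apply Z.leb_le; lia).
    assert (G2 : (h <=? h - 1) = false) by (apply Z.leb_gt; lia).
    rewrite G1 in F1. rewrite G2 in F2.
    revert F1 F2.
    destruct (0 <=? h), (0 <=? h - 1), (forallb (fun y => 0<=?y) l), (forallb (fun y => y<=?h) l),
      (forallb (fun y => y<=?h-1) l), B, (has_H_at 0 h w); simpl; intros; try reflexivity; discriminate.
  - assert (G : (m <=? h) = (m <=? h - 1)).
    { destruct (Z.leb_spec m h), (Z.leb_spec m (h-1)); auto; lia. }
    rewrite G in F1.
    revert F1 F2.
    destruct (0 <=? h), (0 <=? h - 1), (forallb (fun y => 0<=?y) l), (forallb (fun y => y<=?h) l),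
      (forallb (fun y => y<=?h-1) l), B, (has_H_at 0 h w), (has_H_at 0 m w), (m <=? h-1);
      simpl; intros; try reflexivity; try discriminate.
Qed.

Lemma acc_mono h w : forall j, acc (h-1) h j w = true -> acc h h j w = true.
Proof.
  induction w as [|s w IH]; intros j Hj; simpl in *.
  - repeat rewrite andb_true_iff in *. rewrite !Z.leb_le in *. intuition lia.
  - repeat rewrite andb_true_iff in *. rewrite !Z.leb_le in *.
    destruct Hj as [A1 [A2 A3]]. split; [lia|split; auto].
Qed.

Open Scope nat_scope.
Definition cnt (P : list step -> bool) (n : nat) : nat := length (filter P (all_words n)).

Lemma cnt_S P n : cnt P (S n) =
  cnt (fun w => P (U::w)) n + cnt (fun w => P (D::w)) n + cnt (fun w => P (H::w)) n.
Proof.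
  unfold cnt. simpl. induction (all_words n) as [|w l IH]; simpl; auto.
  destruct (P (U::w)), (P (D::w)), (P (H::w)); simpl; rewrite IH; lia.
Qed.

Lemma cnt_ext P Q n : (forall w, P w = Q w) -> cnt P n = cnt Q n.
Proof. intro E. unfold cnt. f_equal. apply filter_ext. auto. Qed.

Lemma cnt_split P Q n : cnt P n = cnt (fun w => P w && Q w) n + cnt (fun w => P w && negb (Q w)) n.
Proof.
  unfold cnt. induction (all_words n) as [|w l IH]; simpl; auto.
  destruct (P w), (Q w); simpl; lia.
Qed.

Lemma fm_len (l : list (list step)) : length (flat_map (fun w : list step => [U :: w; D :: w; H :: w]) l) = 3 * length l.
Proof. induction l; simpl; auto. rewrite IHl. lia. Qed.

Lemma all_words_len n : length (all_words n) = 3 ^ n.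
Proof. induction n; simpl; auto. rewrite fm_len, IHn. lia. Qed.

Lemma all_words_in n w : In w (all_words n) -> length w = n.
Proof.
  revert w; induction n; simpl; intros w Hw.
  - simpl in Hw. destruct Hw as [<-|[]]; auto.
  - apply in_flat_map in Hw. destruct Hw as [x [Hx Hw]].
    simpl in Hw. destruct Hw as [<-|[<-|[<-|[]]]]; simpl; f_equal; auto.
Qed.

Lemma cnt_le P n : cnt P n <= 3 ^ n.
Proof. unfold cnt. rewrite <- all_words_len. apply (filter_length_le P). Qed.

Lemma cnt_false P n : (forall w, P w = false) -> cnt P n = 0.
Proof. intro E. unfold cnt. induction (all_words n); simpl; auto. rewrite E. auto. Qed.

Lemma cnt_le_ext P Q n : (forall w, length w = n -> P w = Q w) -> cnt P n = cnt Q n.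
Proof.
  intro E. unfold cnt. f_equal. apply filter_ext_in. intros w Hw. apply E. apply (all_words_in n w Hw).
Qed.

Fixpoint nsum (g : nat -> nat) (N : nat) : nat :=
  match N with 0 => g 0 | S N => nsum g N + g (S N) end.

Lemma cnt_sum P (f : list step -> Z) n N :
  nsum (fun h => cnt (fun w => P w && (f w =? Z.of_nat h)%Z) n) N =
  cnt (fun w => P w && (0 <=? f w)%Z && (f w <=? Z.of_nat N)%Z) n.
Proof.
  induction N; simpl.
  - apply cnt_ext. intro w. destruct (P w); simpl; auto.
    destruct (Z.eqb_spec (f w) 0), (Z.leb_spec 0 (f w)), (Z.leb_spec (f w) 0); simpl; auto; lia.
  - rewrite IHN. symmetry. rewrite (cnt_split _ (fun w => (f w <=? Z.of_nat N)%Z)). f_equal.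
    + apply cnt_ext. intro w. destruct (P w); simpl; auto.
      destruct (Z.leb_spec 0 (f w)), (Z.leb_spec (f w) (Z.of_nat N)), (Z.leb_spec (f w) (Z.pos (Pos.of_succ_nat N))); simpl; auto; lia.
    + apply cnt_ext. intro w. destruct (P w); simpl; auto.
      destruct (Z.leb_spec 0 (f w)), (Z.leb_spec (f w) (Z.of_nat N)), (Z.leb_spec (f w) (Z.pos (Pos.of_succ_nat N))),
        (Z.eqb_spec (f w) (Z.pos (Pos.of_succ_nat N))); simpl; auto; lia.
Qed.

Lemma fold_nonneg l : (0 <= fold_right Z.max 0 l)%Z.
Proof. induction l; simpl; lia. Qed.

Lemma fold_levels_le w : forall j, (fold_right Z.max 0 (levels j w) <= Z.max 0 j + Z.of_nat (length w))%Z.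
Proof.
  induction w as [|s w IH]; intro j; simpl.
  - lia.
  - specialize (IH (j + delta s)%Z). destruct s; simpl in *; lia.
Qed.

Lemma height_bounds w : (0 <= height w <= Z.of_nat (length w))%Z.
Proof. unfold height. split. apply fold_nonneg. generalize (fold_levels_le w 0). lia. Qed.

Definition c (h n : nat) : nat := cnt (fun w => good w && (height w =? Z.of_nat h)%Z) n.

Lemma b_sum n N : n <= N -> b n = nsum (fun h => c h n) N.
Proof.
  intro HN. unfold c. rewrite cnt_sum. unfold b. fold (cnt good n).
  apply cnt_le_ext. intros w Hw. destruct (height_bounds w).
  destruct (good w); simpl; auto.
  destruct (Z.leb_spec 0 (height w)), (Z.leb_spec (height w) (Z.of_nat N)); simpl; auto; lia.
Qed.

Lemma c_split h n : cnt (acc (Z.of_nat h) (Z.of_nat h) 0) n =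
  cnt (acc (Z.of_nat h - 1) (Z.of_nat h) 0) n + c h n.
Proof.
  rewrite (cnt_split _ (acc (Z.of_nat h - 1) (Z.of_nat h) 0)). f_equal.
  - apply cnt_ext. intro w. case_eq (acc (Z.of_nat h - 1) (Z.of_nat h) 0 w); intro E.
    + rewrite (acc_mono _ _ _ E). auto.
    + destruct (acc (Z.of_nat h) (Z.of_nat h) 0 w); auto.
  - unfold c. apply cnt_ext. intro w. rewrite good_char by lia. auto.
Qed.

Lemma cnt_acc0 top t j : cnt (acc top t j) 0 = if ((0<=?j)&&(j<=?top)&&(j=?0))%Z then 1 else 0.
Proof. unfold cnt. simpl. destruct ((0<=?j)&&(j<=?top)&&(j=?0))%Z; reflexivity. Qed.

Lemma cnt_acc_out top t j n : ~ (0 <= j <= top)%Z -> cnt (acc top t j) n = 0.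
Proof.
  intro Hj. apply cnt_false. intro w. destruct w; simpl;
  destruct (Z.leb_spec 0 j), (Z.leb_spec j top); simpl; auto; lia.
Qed.

Lemma cnt_accS top t j n : (0 <= j <= top)%Z -> cnt (acc top t j) (S n) =
  cnt (acc top t (j+1)) n + cnt (acc top t (j-1)) n + (if (j=?t)%Z then 0 else cnt (acc top t j) n).
Proof.
  intro Hj. rewrite cnt_S.
  assert (E: (0 <=? j)%Z && (j <=? top)%Z = true).
  { destruct (Z.leb_spec 0 j), (Z.leb_spec j top); auto; lia. }
  f_equal; [f_equal|].
  - apply cnt_ext. intro w. simpl. rewrite E. auto.
  - apply cnt_ext. intro w. simpl. rewrite E. replace (j + -1)%Z with (j-1)%Z by lia. auto.
  - destruct (j =? t)%Z eqn:Et.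
    + apply cnt_false. intro w. simpl. rewrite E, Et. auto.
    + apply cnt_ext. intro w. simpl. rewrite E, Et. simpl. rewrite Z.add_0_r. auto.
Qed.
Open Scope R_scope.
From Stdlib Require Import Reals ZArith List Lia Lra Psatz Bool.
From Coquelicot Require Import Coquelicot.
Open Scope R_scope.

Lemma v_props z : 0 < z < 1/3 -> 0 < v z < 1 /\ z * (1 + v z + (v z)^2) = v z.
Proof.
  intros [h0 h1]. unfold v.
  set (D := 1 - 2*z - 3*z^2).
  assert (HD : 0 < D) by (unfold D; nra).
  set (q := sqrt D).
  assert (hq0 : 0 <= q) by apply sqrt_pos.
  assert (hq2 : q * q = D) by (apply sqrt_sqrt; lra).
  assert (A1 : q < 1 - z) by (unfold D in hq2; nra).
  assert (A2 : 1 - 3*z < q) by (unfold D in hq2; nra).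
  repeat split.
  - apply Rdiv_lt_0_compat; lra.
  - apply (Rmult_lt_reg_r (2*z)); [lra|]. field_simplify; lra.
  - field_simplify_eq; [|lra]. unfold D in hq2. nra.
Qed.

Lemma ex_gf z P : 0 < z < 1/3 -> ex_series (fun n => INR (cnt P n) * z^n).
Proof.
  intros hz. apply (@ex_series_le R_AbsRing R_CompleteNormedModule _ (fun n => (3*z)^n)).
  - intro n. rewrite Rpow_mult_distr. change norm with Rabs. simpl.
    rewrite Rabs_right.
    + apply Rmult_le_compat_r. apply pow_le; lra.
      replace 3 with (INR 3) by (simpl; lra). rewrite <- pow_INR. apply le_INR. apply cnt_le.
    + apply Rle_ge, Rmult_le_pos. apply pos_INR. apply pow_le; lra.
  - apply ex_series_geom. rewrite Rabs_right; lra.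
Qed.

Definition GF z top t j := Series (fun n => INR (cnt (acc top t j) n) * z^n).

Lemma GF_out z top t j : ~ (0 <= j <= top)%Z -> GF z top t j = 0.
Proof.
  intro Hj. unfold GF. rewrite (Series_ext _ (fun n => 0 * z^n)).
  - rewrite Series_scal_l. ring.
  - intro n. rewrite cnt_acc_out by auto. simpl. ring.
Qed.

Lemma GF_eq z top t j : 0 < z < 1/3 -> (0 <= j <= top)%Z ->
  GF z top t j = (if (j =? 0)%Z then 1 else 0) +
    z * (GF z top t (j+1) + GF z top t (j-1) + (if (j =? t)%Z then 0 else GF z top t j)).
Proof.
  intros hz Hj. unfold GF at 1. rewrite Series_incr_1 by (apply ex_gf; auto).
  rewrite cnt_acc0.
  assert (E: (0 <=? j)%Z && (j <=? top)%Z = true).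
  { destruct (Z.leb_spec 0 j), (Z.leb_spec j top); auto; lia. }
  rewrite E. simpl andb.
  f_equal. { destruct (j =? 0)%Z; simpl; ring. }
  unfold GF.
  destruct (j =? t)%Z eqn:Et.
  - rewrite Rplus_0_r, <- Series_plus by (apply ex_gf; auto).
    rewrite <- Series_scal_l.
    apply Series_ext. intro n. rewrite cnt_accS by auto. rewrite Et.
    rewrite !plus_INR. simpl. ring.
  - rewrite <- Series_plus by (apply ex_gf; auto).
    assert (X : ex_series (fun n => INR (cnt (acc top t (j + 1)) n) * z ^ n +
      INR (cnt (acc top t (j - 1)) n) * z ^ n)).
    { exact (ex_series_plus _ _ (ex_gf z _ hz) (ex_gf z _ hz)). }
    rewrite <- (Series_plus _ _ X (ex_gf z _ hz)).
    rewrite <- Series_scal_l.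
    apply Series_ext. intro n. rewrite cnt_accS by auto. rewrite Et.
    rewrite !plus_INR. simpl. ring.
Qed.

Lemma max_nat (f : nat -> R) N : exists k, (k <= N)%nat /\ forall j, (j <= N)%nat -> f j <= f k.
Proof.
  induction N.
  - exists 0%nat. split; auto. intros j Hj. replace j with 0%nat by lia. lra.
  - destruct IHN as [k [Hk Hm]]. destruct (Rle_dec (f (S N)) (f k)).
    + exists k. split; [lia|]. intros j Hj. destruct (Nat.eq_dec j (S N)); [subst; auto|]. apply Hm; lia.
    + exists (S N). split; [lia|]. intros j Hj. destruct (Nat.eq_dec j (S N)); [subst; lra|].
      specialize (Hm j ltac:(lia)). lra.
Qed.

Definition sysR z top t (F : Z -> R) : Prop :=
  (forall j, ~ (0 <= j <= top)%Z -> F j = 0) /\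
  (forall j, (0 <= j <= top)%Z -> F j = (if (j =? 0)%Z then 1 else 0) +
    z * (F (j+1)%Z + F (j-1)%Z + (if (j =? t)%Z then 0 else F j))).

Lemma uniq z top t F X : 0 < z < 1/3 -> sysR z top t F -> sysR z top t X ->
  forall j, (0 <= j <= top)%Z -> F j = X j.
Proof.
  intros hz [F0 F1] [X0 X1].
  set (Dd j := F j - X j).
  assert (D0 : forall j, ~ (0 <= j <= top)%Z -> Dd j = 0).
  { intros j Hj. unfold Dd. rewrite F0, X0 by auto. ring. }
  assert (D1 : forall j, (0 <= j <= top)%Z -> Dd j = z * (Dd (j+1)%Z + Dd (j-1)%Z + (if (j =? t)%Z then 0 else Dd j))).
  { intros j Hj. unfold Dd. rewrite (F1 j Hj) at 1. rewrite (X1 j Hj) at 1. destruct (j =? t)%Z; ring. }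
  intros j Hj.
  destruct (max_nat (fun k => Rabs (Dd (Z.of_nat k))) (Z.to_nat top)) as [k [Hk Hm]].
  assert (Hall : forall i, Rabs (Dd i) <= Rabs (Dd (Z.of_nat k))).
  { intro i. destruct (Z_le_dec 0 i); [destruct (Z_le_dec i top)|].
    - replace i with (Z.of_nat (Z.to_nat i)) by lia. apply Hm. lia.
    - rewrite D0 by lia. rewrite Rabs_R0. apply Rabs_pos.
    - rewrite D0 by lia. rewrite Rabs_R0. apply Rabs_pos. }
  set (m := Rabs (Dd (Z.of_nat k))) in *.
  assert (Hm0 : m <= 3 * z * m).
  { unfold m at 1. rewrite D1 by lia. rewrite Rabs_mult, Rabs_right by lra.
    assert (A1 := Hall (Z.of_nat k + 1)%Z). assert (A2 := Hall (Z.of_nat k - 1)%Z).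
    assert (A3 : Rabs (if (Z.of_nat k =? t)%Z then 0 else Dd (Z.of_nat k)) <= m).
    { destruct (Z.of_nat k =? t)%Z. rewrite Rabs_R0. apply Rabs_pos. apply Rle_refl. }
    assert (Rabs (Dd (Z.of_nat k + 1)%Z + Dd (Z.of_nat k - 1)%Z + (if (Z.of_nat k =? t)%Z then 0 else Dd (Z.of_nat k)))
      <= 3 * m).
    { eapply Rle_trans. apply Rabs_triang. eapply Rle_trans. apply Rplus_le_compat_r. apply Rabs_triang. lra. }
    nra. }
  assert (Hmpos : 0 <= m) by apply Rabs_pos.
  assert (m = 0) by nra.
  assert (Rabs (Dd j) = 0). { assert (Q := Hall j). assert (0 <= Rabs (Dd j)) by apply Rabs_pos. lra. }
  apply Rabs_eq_0 in H0. unfold Dd in H0. lra.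
Qed.

Lemma cand z top t (Y : Z -> R) : (0 <= top)%Z ->
  (forall j, Y j = z * (Y (j+1)%Z + Y (j-1)%Z + Y j)) ->
  z * Y (-1)%Z = 1 ->
  ((t = top + 1)%Z /\ Y (top+1)%Z = 0) \/ (t = top /\ Y (top+1)%Z + Y top = 0) ->
  sysR z top t (fun j => if ((0 <=? j) && (j <=? top))%Z then Y j else 0).
Proof.
  intros Htop gen bot topc. split.
  - intros j Hj. destruct (Z.leb_spec 0 j), (Z.leb_spec j top); simpl; auto; lia.
  - intros j Hj. assert (G := gen j).
    destruct topc as [[Et Ht]|[Et Ht]]; subst t;
    repeat match goal with
    | |- context [(?a <=? ?b)%Z] => destruct (Z.leb_spec a b)
    | |- context [(?a =? ?b)%Z] => destruct (Z.eqb_spec a b)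
    end; simpl; try lia.
    all: try (assert (j = top) by lia; subst j).
    all: try (assert (j = 0)%Z by lia; subst j).
    all: try (assert (top = 0)%Z by lia; subst top).
    all: simpl in *.
    all: try lra.
    all: try (rewrite Ht in G; nra).
    all: try (assert (E : Y (top+1)%Z = - Y top) by lra; rewrite E in G; nra).
    all: try (assert (E : Y 1%Z = - Y 0%Z) by lra; rewrite E in G; nra).
Qed.

Lemma GF_sys z top t : 0 < z < 1/3 -> sysR z top t (GF z top t).
Proof. intro hz. split. apply GF_out. intros j Hj. apply GF_eq; auto. Qed.

Lemma GF_closed z top t (e : nat) : 0 < z < 1/3 -> (0 <= top)%Z ->
  ((Z.of_nat e = 2*top+2 /\ t = top+1) \/ (Z.of_nat e = 2*top+1 /\ t = top))%Z ->
  GF z top t 0 = (1 + v z + v z ^ 2) * (1 - v z ^ e) / (1 - v z ^ (e+2)).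
Proof.
  intros hz Htop He.
  destruct (v_props z hz) as [[v0 v1] vs].
  set (w := v z) in *. set (s := 1 + w + w^2) in *.
  assert (ws : 0 < s) by (unfold s; nra).
  assert (wn : w <> 0) by lra.
  assert (Pe : w ^ (e+2) < 1).
  { apply pow_lt_1_compat; [lra| lia]. }
  set (K := s / (1 - w ^ (e+2))).
  set (Y := fun j => K * (powerRZ w j - powerRZ w (Z.of_nat e - j))).
  assert (gen : forall j, Y j = z * (Y (j+1)%Z + Y (j-1)%Z + Y j)).
  { intro j. unfold Y. clear Y. clearbody K.
    replace (Z.of_nat e - (j+1))%Z with ((Z.of_nat e - j) + (-1))%Z by lia.
    replace (Z.of_nat e - (j-1))%Z with ((Z.of_nat e - j) + 1)%Z by lia.
    replace (j - 1)%Z with (j + (-1))%Z by lia.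
    rewrite !powerRZ_add by auto.
    change (powerRZ w 1) with (w^1). change (powerRZ w (-1)) with (/ w^1).
    replace z with (w / s) by (field_simplify_eq; lra).
    unfold s in *. clearbody w. field. split; nra. }
  assert (bot : z * Y (-1)%Z = 1).
  { unfold Y. replace (Z.of_nat e - -1)%Z with (Z.of_nat (e + 1)) by lia.
    rewrite <- pow_powerRZ. change (powerRZ w (-1)) with (/ w^1). unfold K.
    replace (e+2)%nat with (S (e+1)) in * by lia. rewrite <- tech_pow_Rmult in *.
    replace z with (w / s) by (field_simplify_eq; lra).
    unfold s in *. clearbody w. field. repeat split; nra. }
  assert (topc : ((t = top + 1)%Z /\ Y (top+1)%Z = 0) \/ (t = top /\ Y (top+1)%Z + Y top = 0)).
  { destruct He as [[He Ht]|[He Ht]]; [left|right]; split; auto; unfold Y.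
    - replace (Z.of_nat e - (top+1))%Z with (top+1)%Z by lia. ring.
    - replace (Z.of_nat e - (top+1))%Z with top by lia.
      replace (Z.of_nat e - top)%Z with (top+1)%Z by lia. ring. }
  assert (C := cand z top t Y Htop gen bot topc).
  rewrite (uniq z top t _ _ hz (GF_sys z top t hz) C 0%Z) by lia.
  simpl. unfold Y, K. replace ((0 <=? top)%Z) with true by (symmetry; apply Z.leb_le; lia). rewrite Z.sub_0_r, <- pow_powerRZ. simpl. unfold s in *. clearbody w. field. lra.
Qed.

Definition tt (w : R) (k : nat) := (-1) ^ k * w ^ (S k) / (1 - w ^ (S k)).

Definition G z h := Series (fun n => INR (c h n) * z^n).

Lemma G_is z h : 0 < z < 1/3 -> is_series (fun n => INR (c h n) * z^n) (G z h).
Proof. intro hz. apply Series_correct. apply ex_gf; auto. Qed.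

Lemma G_val z h : 0 < z < 1/3 ->
  G z h = (1 + v z + v z ^ 2) * (1 - / v z ^ 2) * (tt (v z) (2*h+1) + tt (v z) (2*h+2)).
Proof.
  intro hz.
  assert (E : G z h = GF z (Z.of_nat h) (Z.of_nat h) 0 - GF z (Z.of_nat h - 1) (Z.of_nat h) 0).
  { unfold G, GF. rewrite <- Series_minus by (apply ex_gf; auto).
    apply Series_ext. intro n. rewrite c_split, plus_INR. ring. }
  rewrite (GF_closed z _ _ (2*h+1)) in E by (auto; lia).
  assert (E2 : GF z (Z.of_nat h - 1) (Z.of_nat h) 0 =
     (1 + v z + v z ^ 2) * (1 - v z ^ (2*h)) / (1 - v z ^ (2*h+2))).
  { destruct h as [|h].
    - rewrite GF_out by lia. simpl. destruct (v_props z hz) as [[v0 v1] vs]. field. nra.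
    - rewrite (GF_closed z _ _ (2*S h)) by (auto; lia). repeat f_equal; try lia. }
  rewrite E2 in E. rewrite E.
  destruct (v_props z hz) as [[v0 v1] vs].
  set (w := v z) in *. clearbody w.
  unfold tt.
  assert (m1 : (-1)^(2*h+1) = -1) by (rewrite pow_add, pow_1_even; ring).
  assert (m2 : (-1)^(2*h+2) = 1) by (rewrite pow_add, pow_1_even; ring).
  replace (S (2*h+1)) with (2*h+2)%nat by lia.
  replace (S (2*h+2)) with (2*h+3)%nat by lia.
  rewrite m1, m2.
  replace (2*h+1+2)%nat with (2*h+3)%nat by lia.
  rewrite !pow_add. set (q := w ^ (2*h)).
  assert (q0 : 0 < q) by (apply pow_lt; lra).
  assert (q1 : q <= 1).
  { unfold q. clear -v0 v1. induction (2*h)%nat; simpl. lra. nra. }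
  assert (w2 : q * w^2 < 1) by (simpl; nra).
  assert (w3 : q * w^3 < 1) by (simpl; nra).
  assert (w1 : q * w^1 < 1) by (simpl; nra).
  field. repeat split; try lra.
Qed.

Lemma ser_lim a l : is_series a l <-> is_lim_seq (fun n => sum_f_R0 a n) l.
Proof. rewrite is_series_Reals, is_lim_seq_Reals. unfold infinite_sum, Un_cv. tauto. Qed.

Lemma pairs a T : is_series a T -> is_series (fun h => a (2*h+1)%nat + a (2*h+2)%nat) (T - a 0%nat).
Proof.
  rewrite !ser_lim. intro HT.
  assert (E : forall N, sum_f_R0 (fun h => a (2*h+1)%nat + a (2*h+2)%nat) N = sum_f_R0 a (2*N+2) - a 0%nat).
  { induction N.
    - simpl. ring.
    - replace (2 * S N + 2)%nat with (S (S (2*N+2))) by lia.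
      rewrite !tech5, IHN.
      replace (2*S N+1)%nat with (S(2*N+2)) by lia. replace (2*S N+2)%nat with (S(S(2*N+2))) by lia. ring. }
  apply (is_lim_seq_ext (fun N => sum_f_R0 a (2*N+2) - a 0%nat)).
  { intro N. rewrite E. auto. }
  apply is_lim_seq_minus'; [|apply is_lim_seq_const].
  apply (is_lim_seq_subseq (fun n => sum_f_R0 a n) T (fun N => 2*N+2)%nat); auto.
  intros P [N HN]. exists N. intros n Hn. apply HN. lia.
Qed.

Lemma sum_exch (f : nat -> nat -> R) M N :
  sum_f_R0 (fun n => sum_f_R0 (fun h => f h n) M) N = sum_f_R0 (fun h => sum_f_R0 (fun n => f h n) N) M.
Proof.
  induction N.
  - simpl. reflexivity.
  - rewrite tech5, IHN. rewrite <- plus_sum. apply sum_eq. intros i _. rewrite tech5. reflexivity.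
Qed.

Lemma sum_mono (f : nat -> R) H M : (forall n, 0 <= f n) -> (H <= M)%nat -> sum_f_R0 f H <= sum_f_R0 f M.
Proof.
  intros Hf HM. replace M with (H + (M - H))%nat by lia. induction (M - H)%nat.
  - rewrite Nat.add_0_r. lra.
  - replace (H + S n)%nat with (S (H + n)) by lia. rewrite tech5. specialize (Hf (S (H+n))). lra.
Qed.

Lemma tonelli (a : nat -> nat -> R) (G B : nat -> R) L :
  (forall h n, 0 <= a h n) -> (forall h, is_series (a h) (G h)) -> is_series G L ->
  (forall n N, (n <= N)%nat -> B n = sum_f_R0 (fun h => a h n) N) -> ex_series B -> is_series B L.
Proof.
  intros Ha HG HL HB Hex.
  assert (HB' := Series_correct _ Hex). set (L' := Series B) in *.
  assert (HGl : forall h, Un_cv (fun N => sum_f_R0 (a h) N) (G h)).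
  { intro h. apply is_lim_seq_Reals. apply ser_lim. auto. }
  assert (F1 : forall h N, sum_f_R0 (a h) N <= G h).
  { intros h N. apply sum_incr; auto. }
  assert (G0 : forall h, 0 <= G h).
  { intro h. specialize (F1 h 0%nat). simpl in F1. specialize (Ha h 0%nat). lra. }
  assert (F2 : forall N, sum_f_R0 G N <= L).
  { intro N. apply sum_incr; auto. apply is_lim_seq_Reals. apply ser_lim. auto. }
  assert (B0 : forall n, 0 <= B n).
  { intro n. rewrite (HB n n) by lia. apply cond_pos_sum. auto. }
  assert (F3 : forall N, sum_f_R0 B N <= L).
  { intro N. rewrite (sum_eq _ (fun n => sum_f_R0 (fun h => a h n) N)) by (intros; apply HB; auto).
    rewrite sum_exch. eapply Rle_trans; [|apply (F2 N)]. apply sum_Rle. intros. apply F1. }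
  assert (F4 : forall N, sum_f_R0 B N <= L').
  { intro N. apply sum_incr; auto. apply is_lim_seq_Reals. apply ser_lim. auto. }
  assert (F5 : forall H N, sum_f_R0 (fun h => sum_f_R0 (a h) N) H <= L').
  { intros H N. rewrite <- sum_exch. eapply Rle_trans; [|apply (F4 N)]. apply sum_Rle. intros n _.
    rewrite (HB n (Nat.max H n)) by lia. apply sum_mono. intro; apply Ha. lia. }
  assert (F6 : forall H, is_lim_seq (fun N => sum_f_R0 (fun h => sum_f_R0 (a h) N) H) (sum_f_R0 G H)).
  { induction H.
    - simpl. apply ser_lim. auto.
    - simpl. apply is_lim_seq_plus'; auto. apply ser_lim. auto. }
  assert (Le1 : L' <= L).
  { assert (X := is_lim_seq_le _ _ _ _ F3 (proj1 (ser_lim _ _) HB') (is_lim_seq_const L)). simpl in X. auto. }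
  assert (Le2 : L <= L').
  { assert (Y : forall H, sum_f_R0 G H <= L').
    { intro H. assert (X := is_lim_seq_le _ _ _ _ (F5 H) (F6 H) (is_lim_seq_const L')). simpl in X. auto. }
    assert (X := is_lim_seq_le _ _ _ _ Y (proj1 (ser_lim _ _) HL) (is_lim_seq_const L')). simpl in X. auto. }
  replace L with L' by lra. auto.
Qed.

Lemma nsum_INR g N : INR (nsum g N) = sum_f_R0 (fun h => INR (g h)) N.
Proof. induction N; simpl nsum; auto. rewrite plus_INR, IHN. rewrite tech5. auto. Qed.

Lemma ex_tt w : 0 < w < 1 -> ex_series (tt w).
Proof.
  intro hw. apply (@ex_series_le R_AbsRing R_CompleteNormedModule _ (fun k => / (1 - w) * w ^ k)).
  - intro k. change norm with Rabs. simpl. unfold tt.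
    assert (p1 : w ^ k <= 1). { clear -hw. induction k; simpl. lra. nra. }
    assert (p0 : 0 < w ^ k) by (apply pow_lt; lra).
    change (w ^ S k) with (w * w ^ k).
    set (d := 1 - w * w ^ k).
    assert (d0 : 1 - w <= d) by (unfold d; nra).
    assert (y0 : 0 <= w * w ^ k / d) by (apply Rdiv_le_0_compat; nra).
    assert (yb : w * w ^ k / d <= / (1 - w) * w ^ k).
    { apply Rle_trans with (w ^ k / d).
      - unfold Rdiv. apply Rmult_le_compat_r. apply Rlt_le, Rinv_0_lt_compat. lra. nra.
      - unfold Rdiv. rewrite (Rmult_comm (w^k)). apply Rmult_le_compat_r. lra.
        apply Rinv_le_contravar; lra. }
    assert (sg : (-1) ^ k = 1 \/ (-1) ^ k = -1).
    { clear. induction k; simpl; [left; auto|]. destruct IHk as [-> | ->]; [right|left]; ring. }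
    destruct sg as [-> | ->].
    + rewrite Rmult_1_l, Rabs_right; lra.
    + replace (-1 * (w * w ^ k) / d) with (- (w * w ^ k / d)) by (unfold Rdiv; ring).
      rewrite Rabs_Ropp, Rabs_right; lra.
  - apply (@ex_series_scal_l R_AbsRing R_CompleteNormedModule (/ (1-w)) (fun k => w ^ k)).
    apply ex_series_geom. rewrite Rabs_right; lra.
Qed.

Theorem mainTheorem5 (z : R) (hz0 : 0 < z) (hz1 : z < 1 / 3) :
  exists T : R,
    is_series (fun k : nat => (-1) ^ k * (v z) ^ (S k) / (1 - (v z) ^ (S k))) T /\
    is_series (fun n : nat => INR (b n) * z ^ n)
      ((1 + v z + (v z) ^ 2) * (1 - / (v z) ^ 2) * T
       + (1 + v z) * (1 + v z + (v z) ^ 2) / v z).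
Proof.
  assert (hz : 0 < z < 1/3) by lra.
  destruct (v_props z hz) as [[v0 v1] vs].
  assert (HT := Series_correct _ (ex_tt (v z) (conj v0 v1))).
  set (T := Series (tt (v z))) in *.
  exists T. split; [exact HT|].
  assert (HG : is_series (G z) ((1 + v z + (v z) ^ 2) * (1 - / (v z) ^ 2) * (T - tt (v z) 0))).
  { apply (is_series_ext (fun h => (1 + v z + (v z) ^ 2) * (1 - / (v z) ^ 2) * (tt (v z) (2*h+1) + tt (v z) (2*h+2)))).
    { intro h. rewrite G_val; auto. }
    apply (@is_series_scal_l R_AbsRing R_NormedModule). apply pairs. auto. }
  replace ((1 + v z + v z ^ 2) * (1 - / v z ^ 2) * T + (1 + v z) * (1 + v z + v z ^ 2) / v z)
    with ((1 + v z + (v z) ^ 2) * (1 - / (v z) ^ 2) * (T - tt (v z) 0)).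
  2:{ unfold tt. simpl. field. lra. }
  apply (tonelli (fun h n => INR (c h n) * z ^ n) (G z)); auto.
  - intros h n. apply Rmult_le_pos. apply pos_INR. apply pow_le. lra.
  - intro h. apply G_is. auto.
  - intros n N HnN. rewrite (b_sum n N HnN), nsum_INR. rewrite <- scal_sum. apply Rmult_comm.
  - apply (ex_gf z good hz).
Qed.
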